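(* Let $B$ be the complex unital $*$-algebra generated by hermitian $p,q$ with relation $pq-qp=-\mathrm{i}\cdot 1$, let $d:=\mathrm{i}p$, $A:=\mathbb{C}[q]\subseteq B$, and $X:=\operatorname{span}\{a\,d^2\,b: a,b\in A\}\subseteq B$, a $*$-bimodule for $A$ under multiplication and involution of $B$. Let $\mu$ be a Radon measure on $\mathbb{R}$, not supported on a finite set, for which all polynomials are integrable, and let $f(a)=\int a\,d\mu$ on $A$ (polynomials in $q$ identified with polynomials in the real variable). Then: (i) the map $F_0\big(\sum_j a_j d^2 b_j\big):=\int\sum_j a_j b_j\,d\mu$ is a well-defined hermitian linear functional on $X$; (ii) for $x=\sum_j a_jd^2b_j$ and $h:=\sum_j a_jb_j$, one has $|F_0(a^+\cdot x)|^2\le f(h^+h)\,f(a^+a)$ for all $a\in A$; (iii) the GNS representation of $f$ acts on $\mathcal{D}_f=\mathbb{C}[x]\subseteq L^2(\mathbb{R};\mu)$ by multiplication, $\rho_f(a)b=ab$, with $\varphi_f=1$, and setting $\theta_{F_0}\big(\sum_j a_jd^2b_j\big)b:=\sum_j a_jb_jb$ for $b\in\mathcal{D}_f$ gives a well-defined map such that $(\theta_{F_0},\rho_f)$ is a strong $*$-representation of $X$ on $\mathcal{D}_f$ with $F_0(a\cdot x\cdot b)=\langle\theta_{F_0}(x)\rho_f(b)\varphi_f,\rho_f(a^+)\varphi_f\rangle$ for all $a,b\in A$, $x\in X$; in particular $\theta_{F_0}(d^2)=I$.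
   Context: A $*$-bimodule $X$ for $A$: a complex $A$-bimodule (unital left and right $A$-module with commuting actions) with conjugate-linear involution satisfying $(a\cdot x\cdot b)^+=b^+\cdot x^+\cdot a^+$. On $A=\mathbb{C}[q]$, $a^+$ is the polynomial with complex-conjugated coefficients. Hermitian: $F(x^+)=\overline{F(x)}$. GNS representation of a positive functional $f$: $\mathcal{D}_f=A/\{a:f(a^+a)=0\}$ with inner product $f(b^+a)$, $\rho_f(a)(b+\mathcal{N}_f)=ab+\mathcal{N}_f$, $\varphi_f=1+\mathcal{N}_f$. A $*$-representation of $X$ on an inner product space $\mathcal{D}$ with completion $\mathcal{H}$ is a pair $(\theta,\rho)$ with $\rho$ a $*$-representation of $A$ ($\langle\rho(a)\varphi,\psi\rangle=\langle\varphi,\rho(a^+)\psi\rangle$) with $\rho(1)=I$, and $\theta$ a linear map from $X$ into operators $t:\mathcal{D}\to\mathcal{H}$ with $\mathcal{D}(t^* )\supseteq\mathcal{D}$, such that $\theta(x^+)=\theta(x)^*|_{\mathcal{D}}$ and $\langle\theta(a\cdot x\cdot b)\varphi,\psi\rangle=\langle\theta(x)\rho(b)\varphi,\rho(a^+)\psi\rangle$. It is strong if every $\theta(x)$ maps $\mathcal{D}$ into $\mathcal{D}$ and $\theta(x)^*$ also maps $\mathcal{D}$ into $\mathcal{D}$. *)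

(* Defs.v *)
From HB Require Import structures.
From mathcomp Require Import all_boot all_order all_algebra.
From mathcomp Require Import all_classical all_reals all_analysis.
From mathcomp Require Import complex.
Set Implicit Arguments. Unset Strict Implicit. Unset Printing Implicit Defensive.
Import Order.TTheory GRing.Theory Num.Theory.
Local Open Scope ring_scope.
Local Open Scope classical_set_scope.

Section Defs.
Variable R : realType.
Local Notation C := (R[i]).

(** The involution on A = C[q]: complex conjugation of the coefficients. *)
Definition pconj (p : {poly C}) : {poly C} := map_poly (@Num.conj C) p.

(** ---------------------------------------------------------------------
    The Weyl algebra B, realized concretely (and faithfully) as the algebra
    of polynomial differential operators acting on C[x]:
      q = multiplication by x,   p = -i d/dx,   so that  pq - qp = -i.  Two elements of B are equal iff they act equally
    on C[x] (the Schroedinger-type representation of the Weyl algebra on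
    C[x] is faithful).
    --------------------------------------------------------------------- *)
Definition qop (g : {poly C}) : {poly C} := 'X * g.
Definition pop (g : {poly C}) : {poly C} := (- 'i) *: g^`().
Definition dop (g : {poly C}) : {poly C} := 'i *: pop g.
Definition Aop (a : {poly C}) (g : {poly C}) : {poly C} := a * g.

(** A formal expression  sum_j a_j d^2 b_j  (an element of X) *)
Definition Xsum := seq ({poly C} * {poly C}).

Definition Bval (s : Xsum) : {poly C} -> {poly C} :=
  fun g => \sum_(c <- s) Aop c.1 (dop (dop (Aop c.2 g))).

(** Vector space, bimodule and involution structure of X, on representatives:
    z (sum a_j d^2 b_j) = sum (z a_j) d^2 b_j,
    a . (sum a_j d^2 b_j) . b = sum (a a_j) d^2 (b_j b),
    (sum a_j d^2 b_j)^+ = sum b_j^+ d^2 a_j^+   (since (d^2)^+ = d^2). *)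
Definition Xscale (z : C) (s : Xsum) : Xsum := [seq (z *: c.1, c.2) | c <- s].
Definition Xact (a : {poly C}) (s : Xsum) (b : {poly C}) : Xsum :=
  [seq (a * c.1, c.2 * b) | c <- s].
Definition Xlact (a : {poly C}) (s : Xsum) : Xsum := [seq (a * c.1, c.2) | c <- s].
Definition Xadj (s : Xsum) : Xsum := [seq (pconj c.2, pconj c.1) | c <- s].
Definition Xd2 : Xsum := [:: (1, 1)].

Definition hsum (s : Xsum) : {poly C} := \sum_(c <- s) c.1 * c.2.

Definition cint (mu : {measure set R -> \bar R}) (g : R -> C) : C :=
  real_complex R (Rintegral mu setT (fun x => complex.Re (g x)))
  + 'i * real_complex R (Rintegral mu setT (fun x => complex.Im (g x))).

Definition fmu (mu : {measure set R -> \bar R}) (a : {poly C}) : C :=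
  cint mu (fun x => a.[real_complex R x]).

Definition F0 (mu : {measure set R -> \bar R}) (s : Xsum) : C := fmu mu (hsum s).

Definition gns_ip (mu : {measure set R -> \bar R}) (a b : {poly C}) : C :=
  fmu mu (pconj b * a).
Definition gns_rho (a b : {poly C}) : {poly C} := a * b.
Definition gns_phi : {poly C} := 1.

Definition thetaF0 (s : Xsum) (b : {poly C}) : {poly C} := hsum s * b.

Definition is_inner_product (D : lmodType C) (ip : D -> D -> C) : Prop :=
  [/\ forall z u v w, ip (z *: u + v) w = z * ip u w + ip v w,
      forall u v, ip v u = Num.conj (ip u v),
      forall u, 0 <= ip u u
    & forall u, ip u u = 0 -> u = 0].

(** The conditions
    [domain of adjoint of theta(x) contains D, theta(x^+) = adjoint restricted to D] are expressed
    through the inner product on D (D is dense in its completion H). *)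
Record strong_star_rep (D : lmodType C) (ip : D -> D -> C)
    (theta : Xsum -> D -> D) (rho : {poly C} -> D -> D) : Prop := {
  ssr_rho_lin : forall a z u v, rho a (z *: u + v) = z *: rho a u + rho a v;
  ssr_rho_linA : forall a b z u, rho (z *: a + b) u = z *: rho a u + rho b u;
  ssr_rho_mul : forall a b u, rho (a * b) u = rho a (rho b u);
  ssr_rho_one : forall u, rho 1 u = u;
  ssr_rho_star : forall a u v, ip (rho a u) v = ip u (rho (pconj a) v);
  ssr_theta_wd : forall s1 s2, Bval s1 =1 Bval s2 -> forall u, theta s1 u = theta s2 u;
  ssr_theta_add : forall s1 s2 u, theta (s1 ++ s2) u = theta s1 u + theta s2 u;
  ssr_theta_scale : forall z s u, theta (Xscale z s) u = z *: theta s u;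
  ssr_theta_lin : forall s z u v, theta s (z *: u + v) = z *: theta s u + theta s v;
  (* theta(x^+) = theta(x)^* restricted to D (in particular D is in the domain
     of theta(x)^* and theta(x)^* maps D into D: strongness) *)
  ssr_theta_star : forall s u v, ip (theta s u) v = ip u (theta (Xadj s) v);
  ssr_theta_bimod : forall a b s u v,
    ip (theta (Xact a s b) u) v = ip (theta s (rho b u)) (rho (pconj a) v) }.

End Defs.

(* Main.v *)
Set Warnings "-all".
Set Implicit Arguments. Unset Strict Implicit.
Require Import Defs.
From HB Require Import structures.
From mathcomp Require Import all_boot all_order all_algebra.
From mathcomp Require Import all_classical all_reals all_analysis.
From mathcomp Require Import complex.
From mathcomp Require Import ring.
Import Order.TTheory GRing.Theory Num.Theory.
Local Open Scope ring_scope.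
Local Open Scope classical_set_scope.

Section Cplx.
Variable R : realType.
 
Lemma conjE (x : R[i]) : Num.conj x = conjc x.
Proof. by case: x. Qed.
Lemma ReD (u v : R[i]) : complex.Re (u + v) = (complex.Re u + complex.Re v :> R). Proof. case: u => ? ?; case: v => ? ? /=; ring. Qed.
Lemma ImD (u v : R[i]) : complex.Im (u + v) = (complex.Im u + complex.Im v :> R). Proof. case: u => ? ?; case: v => ? ? /=; ring. Qed.
Lemma ReMr (w : R[i]) (x : R) : complex.Re (w * real_complex R x) = (complex.Re w * x :> R).
Proof. case: w => a b /=; ring. Qed.
Lemma ImMr (w : R[i]) (x : R) : complex.Im (w * real_complex R x) = (complex.Im w * x :> R).
Proof. case: w => a b /=; ring. Qed.
Lemma ReM (u v : R[i]) : complex.Re (u * v) = (complex.Re u * complex.Re v - complex.Im u * complex.Im v :> R).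
Proof. case: u => ? ?; case: v => ? ? /=; ring. Qed.
Lemma ImM (u v : R[i]) : complex.Im (u * v) = (complex.Re u * complex.Im v + complex.Im u * complex.Re v :> R).
Proof. case: u => a b; case: v => c d /=; ring. Qed.
Lemma ReJ (u : R[i]) : complex.Re (Num.conj u) = (complex.Re u :> R). Proof. case: u => ? ? /=; ring. Qed.
Lemma ImJ (u : R[i]) : complex.Im (Num.conj u) = (- complex.Im u :> R). Proof. case: u => ? ? /=; ring. Qed.
Lemma Cext (u v : R[i]) : complex.Re u = complex.Re v -> complex.Im u = complex.Im v -> u = v.
Proof. by case: u; case: v => /= ? ? ? ? -> ->. Qed.
Lemma ReE (a b : R) : complex.Re (real_complex R a + 'i * real_complex R b) = (a :> R).
Proof. rewrite /=; ring. Qed.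
Lemma ImE (a b : R) : complex.Im (real_complex R a + 'i * real_complex R b) = (b :> R).
Proof. rewrite /=; ring. Qed.
End Cplx.
Section Cplx2.
Variable R : realType.
Lemma Rer (a : R) : complex.Re (real_complex R a) = a. Proof. by []. Qed.
Lemma Imr (a : R) : complex.Im (real_complex R a) = 0. Proof. by []. Qed.
Lemma Rei (a : R) : complex.Re ('i * real_complex R a) = 0. Proof. rewrite /=; ring. Qed.
Lemma Imi (a : R) : complex.Im ('i * real_complex R a) = a. Proof. rewrite /=; ring. Qed.
End Cplx2.
Section Fmu.
Variable R : realType.
Variable mu : {measure set R -> \bar R}.
Hypothesis Hpoly : forall n : nat, mu.-integrable setT (fun x : R => (x ^+ n)%:E).

Lemma int_aux (p : {poly R[i]}) : forall n,
  mu.-integrable setT (fun x => (complex.Re p.[real_complex R x] * x ^+ n)%:E) /\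
  mu.-integrable setT (fun x => (complex.Im p.[real_complex R x] * x ^+ n)%:E).
Proof.
elim/poly_ind: p => [|p c IH] n.
  split; apply: (eq_integrable measurableT (cst 0%E)); (try exact: integrable0);
   by move=> x _; rewrite horner0 /= mul0r.
have [IH1 IH2] := IH n.+1.
split.
  apply: (eq_integrable measurableT _ _ _ (integrableD measurableT IH1 (integrableZl measurableT (complex.Re c) (Hpoly n)))).
  move=> x _ /=; rewrite hornerMXaddC ReD ReMr -EFinM -EFinD; congr EFin; rewrite exprS; ring.
apply: (eq_integrable measurableT _ _ _ (integrableD measurableT IH2 (integrableZl measurableT (complex.Im c) (Hpoly n)))).
move=> x _ /=; rewrite hornerMXaddC ImD ImMr -EFinM -EFinD; congr EFin; rewrite exprS; ring.
Qed.

Definition rp (p : {poly R[i]}) (x : R) := complex.Re p.[real_complex R x].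
Definition ip (p : {poly R[i]}) (x : R) := complex.Im p.[real_complex R x].

Lemma int_rp p : mu.-integrable setT (EFin \o rp p).
Proof.
apply: (eq_integrable measurableT _ _ _ (proj1 (int_aux p 0))) => x _ /=.
by rewrite expr0 mulr1.
Qed.
Lemma int_ip p : mu.-integrable setT (EFin \o ip p).
Proof.
apply: (eq_integrable measurableT _ _ _ (proj2 (int_aux p 0))) => x _ /=.
by rewrite expr0 mulr1.
Qed.

Lemma intZ k (f : R -> R) : mu.-integrable setT (EFin \o f) ->
  mu.-integrable setT (EFin \o (fun x => k * f x)).
Proof.
move=> h; apply: (eq_integrable measurableT _ _ _ (integrableZl measurableT k h)).
by move=> x _ /=; rewrite EFinM.
Qed.

Local Notation I f := (Rintegral mu setT f).

Lemma RintN (f : R -> R) : mu.-integrable setT (EFin \o f) ->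
  I (fun x => - f x) = - I f.
Proof.
move=> h; transitivity (I (fun x => (-1) * f x)).
  by apply: eq_Rintegral => x _; rewrite mulN1r.
by rewrite RintegralZl // mulN1r.
Qed.

Lemma fmuE p : fmu mu p = real_complex R (I (rp p)) + 'i * real_complex R (I (ip p)).
Proof. by []. Qed.

Lemma fmuD p q : fmu mu (p + q) = fmu mu p + fmu mu q.
Proof.
rewrite !fmuE; apply: Cext; rewrite ?ReD ?ImD ?Rei ?Imi ?Rer ?Imr ?addr0 ?add0r.
  transitivity (I (fun x => rp p x + rp q x)).
    by apply: eq_Rintegral => x _; rewrite /rp hornerD ReD.
  by rewrite RintegralD //; [exact: int_rp | exact: int_rp].
transitivity (I (fun x => ip p x + ip q x)).
  by apply: eq_Rintegral => x _; rewrite /ip hornerD ImD.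
by rewrite RintegralD //; [exact: int_ip | exact: int_ip].
Qed.

Lemma fmuZ z p : fmu mu (z *: p) = z * fmu mu p.
Proof.
rewrite !fmuE; apply: Cext; rewrite ?ReM ?ImM ?ReD ?ImD ?Rei ?Imi ?Rer ?Imr ?addr0 ?add0r.
  transitivity (I (fun x => complex.Re z * rp p x - complex.Im z * ip p x)).
    by apply: eq_Rintegral => x _; rewrite /rp hornerZ ReM.
  rewrite RintegralB //; [|exact: intZ (int_rp p)|exact: intZ (int_ip p)].
  by rewrite !RintegralZl //; [exact: int_ip | exact: int_rp].
transitivity (I (fun x => complex.Re z * ip p x + complex.Im z * rp p x)).
  by apply: eq_Rintegral => x _; rewrite /ip hornerZ ImM.
rewrite RintegralD //; [|exact: intZ (int_ip p)|exact: intZ (int_rp p)].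
by rewrite !RintegralZl //; [exact: int_rp | exact: int_ip].
Qed.

Lemma conj_real (x : R) : Num.conj (real_complex R x) = real_complex R x.
Proof. by apply: Cext; rewrite ?ReJ ?ImJ //= oppr0. Qed.

Lemma hornerJ p (x : R) : (pconj p).[real_complex R x] = Num.conj p.[real_complex R x].
Proof. by rewrite /pconj -{1}conj_real horner_map. Qed.

Lemma fmuJ p : fmu mu (pconj p) = Num.conj (fmu mu p).
Proof.
rewrite !fmuE; apply: Cext; rewrite ?ReJ ?ImJ ?ReD ?ImD ?Rei ?Imi ?Rer ?Imr ?addr0 ?add0r.
  by apply: eq_Rintegral => x _; rewrite /rp hornerJ ReJ.
rewrite -RintN; last exact: int_ip.
by apply: eq_Rintegral => x _; rewrite /ip hornerJ ImJ.
Qed.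

End Fmu.
Section Fmu2.
Variable R : realType.
Variable mu : {measure set R -> \bar R}.
Hypothesis Hpoly : forall n : nat, mu.-integrable setT (fun x : R => (x ^+ n)%:E).
Hypothesis Hsupp : forall S : set R, finite_set S -> (0 < mu (~` S))%E.
Local Notation I f := (Rintegral mu setT f).

Lemma rp_norm (p : {poly R[i]}) (x : R) : rp (pconj p * p) x =
  complex.Re p.[real_complex R x] ^+ 2 + complex.Im p.[real_complex R x] ^+ 2.
Proof. rewrite /rp hornerM hornerJ ReM ReJ ImJ; ring. Qed.
Lemma ip_norm (p : {poly R[i]}) (x : R) : ip (pconj p * p) x = 0.
Proof. rewrite /ip hornerM hornerJ ImM ReJ ImJ; ring. Qed.

Lemma fmu_norm (p : {poly R[i]}) : fmu mu (pconj p * p) = real_complex R (I (rp (pconj p * p))).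
Proof.
rewrite fmuE; apply: Cext; rewrite ?ReD ?ImD ?Rei ?Imi ?Rer ?Imr ?addr0 ?add0r //.
transitivity (I (fun _ => 0)).
  by apply: eq_Rintegral => x _; exact: ip_norm.
by rewrite /Rintegral integral0_eq.
Qed.

Lemma fmu_ge0 p : 0 <= fmu mu (pconj p * p).
Proof.
rewrite fmu_norm ler0c; apply: Rintegral_ge0 => x _.
by move: (rp_norm p x); rewrite /rp => ->; rewrite addr_ge0 // sqr_ge0.
Qed.

Lemma fmu_def (p : {poly R[i]}) : fmu mu (pconj p * p) = 0 -> p = 0.
Proof.
rewrite fmu_norm => /(congr1 (@complex.Re R)); rewrite Rer /= => H.
set f := rp (pconj p * p) in H.
have hint : mu.-integrable setT (EFin \o f) by exact: (int_rp Hpoly).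
have f0 x : 0 <= f x by rewrite /f rp_norm addr_ge0 // sqr_ge0.
have h0 : (\int[mu]_(x in setT) `|(EFin \o f) x|)%E = 0%E.
  transitivity (\int[mu]_(x in setT) (EFin \o f) x)%E.
    by apply: eq_integral => x _ /=; rewrite ger0_norm.
  rewrite -(fineK (integrable_fin_num measurableT hint)).
  by rewrite -[fine _]/(Rintegral mu setT f) H.
have := (ae_eq_integral_abs mu measurableT (measurable_int mu hint)).1 h0.
case=> N [mN muN sN].
apply/eqP; apply: contraT => pn0.
have [r pr] := closed_field_poly_normal p.
pose S := [set` [seq complex.Re z | z <- r]].
have finS : finite_set S by exact: finite_seq.
have mS : measurable S.
  apply: countable_measurable; last exact: finite_set_countable.
  by move=> t; exact: measurable_set1.
have sub : ~` S `<=` N.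
  move=> x nSx; apply: sN => /= hx; apply: nSx.
  have fx0 : f x = 0.
    by move: (hx Logic.I) => /= [].
  move: fx0; rewrite /f rp_norm => /eqP; rewrite paddr_eq0 ?sqr_ge0 //.
  rewrite !sqrf_eq0 => /andP [/eqP hr /eqP hi].
  have w0 : p.[real_complex R x] = 0 by apply: Cext.
  have : root p (real_complex R x) by apply/rootP.
  rewrite pr rootZ; last by rewrite lead_coef_eq0.
  rewrite root_prod_XsubC => xr.
  by apply/mapP; exists (real_complex R x).
have := Hsupp finS.
by rewrite (subset_measure0 (measurableC mS) mN sub muN) ltxx.
Qed.
End Fmu2.
Lemma Tgen (F : fieldType) (c1 c2 : {poly F}) : c1 * c2 *+ 2 = c1 * deriv (deriv (c2 * 'X^2))
   - 'X * (c1 * deriv (deriv (c2 * 'X))) *+ 2 + 'X^2 * (c1 * deriv (deriv (c2 * 1))).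
Proof.
have d1 : deriv (1 : {poly F}) = 0 by rewrite -polyC1 derivC.
rewrite mulr1 !(derivM, derivD, derivMn, derivX, derivXn) d1 /= expr1 expr0; ring.
Qed.

Lemma comb (F : comNzRingType) (T1 T2 T3 S1 S2 S3 Y : F) :
  (T1 - Y * T2 *+ 2 + Y ^+ 2 * T3) + (S1 - Y * S2 *+ 2 + Y ^+ 2 * S3)
  = (T1 + S1) - Y * (T2 + S2) *+ 2 + Y ^+ 2 * (T3 + S3).
Proof. ring. Qed.

Section Alg.
Variable R : realType.

Lemma dopE (g : {poly R[i]}) : dop g = deriv g.
Proof.
rewrite /dop /pop scalerA.
have -> : ('i * - 'i : R[i]) = 1 by rewrite mulrN -expr2 sqr_i opprK.
by rewrite scale1r.
Qed.

Lemma pconjK (p : {poly R[i]}) : pconj (pconj p) = p.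
Proof. by apply/polyP => k; rewrite /pconj !coef_map /= conjCK. Qed.
Lemma pconjD (p q : {poly R[i]}) : pconj (p + q) = pconj p + pconj q.
Proof. by rewrite /pconj rmorphD. Qed.
Lemma pconjM (p q : {poly R[i]}) : pconj (p * q) = pconj p * pconj q.
Proof. by rewrite /pconj rmorphM. Qed.
Lemma pconj1 : pconj (1 : {poly R[i]}) = 1.
Proof. by rewrite /pconj rmorph1. Qed.
Lemma pconjZ z (p : {poly R[i]}) : pconj (z *: p) = Num.conj z *: pconj p.
Proof. by apply/polyP => k; rewrite /pconj coefZ !coef_map /= coefZ rmorphM. Qed.
Lemma pconj_sum (s : Xsum R) (F : {poly R[i]} * {poly R[i]} -> {poly R[i]}) :
  pconj (\sum_(c <- s) F c) = \sum_(c <- s) pconj (F c).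
Proof. by rewrite /pconj rmorph_sum. Qed.

Lemma hsum_cat (s1 s2 : Xsum R) : hsum (s1 ++ s2) = hsum s1 + hsum s2.
Proof. by rewrite /hsum big_cat. Qed.
Lemma hsum_scale z (s : Xsum R) : hsum (Xscale z s) = z *: hsum s.
Proof.
rewrite /hsum /Xscale big_map scaler_sumr; apply: eq_bigr => c _ /=.
by rewrite scalerAl.
Qed.
Lemma hsum_adj (s : Xsum R) : hsum (Xadj s) = pconj (hsum s).
Proof.
rewrite /hsum /Xadj big_map pconj_sum; apply: eq_bigr => c _ /=.
by rewrite pconjM mulrC.
Qed.
Lemma hsum_act a b (s : Xsum R) : hsum (Xact a s b) = a * hsum s * b.
Proof.
rewrite /hsum /Xact big_map mulr_sumr mulr_suml; apply: eq_bigr => c _ /=.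
by rewrite !mulrA.
Qed.
Lemma hsum_lact a (s : Xsum R) : hsum (Xlact a s) = a * hsum s.
Proof.
rewrite /hsum /Xlact big_map mulr_sumr; apply: eq_bigr => c _ /=.
by rewrite !mulrA.
Qed.

Lemma BvalE (s : Xsum R) g : Bval s g = \sum_(c <- s) c.1 * deriv (deriv (c.2 * g)).
Proof. by rewrite /Bval /Aop; apply: eq_bigr => c _; rewrite !dopE. Qed.

Lemma Bval_hsum (s : Xsum R) :
  hsum s *+ 2 = Bval s ('X^2) - ('X * Bval s 'X) *+ 2 + 'X^2 * Bval s 1.
Proof.
rewrite !BvalE /hsum.
elim: s => [|c s IH]; first by rewrite !big_nil; ring.
rewrite !big_cons mulrnDl IH.
have T := Tgen c.1 c.2.
rewrite T.
exact: comb.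
Qed.

Lemma hsum_wd (s1 s2 : Xsum R) : Bval s1 =1 Bval s2 -> hsum s1 = hsum s2.
Proof.
move=> E; have : hsum s1 *+ 2 = hsum s2 *+ 2 by rewrite !Bval_hsum !E.
rewrite -[hsum s1 *+ 2]mulr_natr -[hsum s2 *+ 2]mulr_natr => /mulIf; apply.
by rewrite -polyC_natr polyC_eq0 pnatr_eq0.
Qed.
End Alg.
Lemma cs_alg (F : comNzRingType) (A B c cc : F) :
  B * (B * A + - cc * c) + - c * (B * cc + - cc * B) = B * (B * A - c * cc).
Proof. ring. Qed.
Lemma ac4 (F : comNzRingType) (x a h b u : F) : x * (a * h * b * u) = a * x * (h * (b * u)).
Proof. ring. Qed.

Section Main.
Variable R : realType.
Variable mu : {measure set R -> \bar R}.
Hypothesis Hpoly : forall n : nat, mu.-integrable setT (fun x : R => (x ^+ n)%:E).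
Hypothesis Hsupp : forall S : set R, finite_set S -> (0 < mu (~` S))%E.

Definition phi (u v : {poly R[i]}) := fmu mu (pconj v * u).

Lemma fmu0 : fmu mu 0 = 0.
Proof. by have := fmuZ Hpoly 0 0; rewrite scale0r mul0r. Qed.
Lemma phiDl u v w : phi (u + v) w = phi u w + phi v w.
Proof. by rewrite /phi mulrDr (fmuD Hpoly). Qed.
Lemma phiZl z u w : phi (z *: u) w = z * phi u w.
Proof. by rewrite /phi -scalerAr (fmuZ Hpoly). Qed.
Lemma phiC u v : phi v u = Num.conj (phi u v).
Proof. by rewrite /phi -(fmuJ Hpoly) pconjM pconjK mulrC. Qed.
Lemma phiDr u v w : phi u (v + w) = phi u v + phi u w.
Proof. rewrite [phi u v]phiC [phi u w]phiC [phi u (v + w)]phiC phiDl rmorphD; reflexivity. Qed.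
Lemma phiZr z u w : phi u (z *: w) = Num.conj z * phi u w.
Proof. rewrite [phi u w]phiC [phi u (z *: w)]phiC phiZl rmorphM; reflexivity. Qed.
Lemma phi_ge0 u : 0 <= phi u u.
Proof. exact: fmu_ge0. Qed.
Lemma phi_def u : phi u u = 0 -> u = 0.
Proof. exact: fmu_def. Qed.

Lemma CS h a : `|phi h a| ^+ 2 <= phi h h * phi a a.
Proof.
have [->|an0] := eqVneq a 0.
  rewrite /phi (_ : pconj 0 = 0) ?mul0r ?fmu0 ?normr0 ?expr2 ?mul0r ?mulr0 //.
  by apply/polyP => k; rewrite /pconj coef_map /= !coef0 conjC0.
set B := phi a a; set c := phi h a; set A := phi h h.
have B0 : 0 < B.
  rewrite lt_def phi_ge0 andbT; apply: contra an0 => /eqP /phi_def ->.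
  by [].
have BR : Num.conj B = B := geC0_conj (ltW B0).
have := phi_ge0 (B *: h + (- c) *: a).
rewrite phiDl !phiZl !phiDr !phiZr -/B -/c -/A (phiC h a) -/c BR rmorphN cs_alg.
rewrite pmulr_rge0 // subr_ge0 => H; rewrite normCK [A * B]mulrC; exact: H.
Qed.
End Main.

Theorem mainTheorem12 (R : realType) (mu : {measure set R -> \bar R})
  (Hpoly : forall n : nat, mu.-integrable setT (fun x : R => (x ^+ n)%:E))
  (Hsupp : forall S : set R, finite_set S -> (0 < mu (~` S))%E) :
  (* (i) F_0 is a well-defined hermitian linear functional on X *)
  [/\ forall s1 s2 : Xsum R, Bval s1 =1 Bval s2 -> F0 mu s1 = F0 mu s2,
      forall s1 s2 : Xsum R, F0 mu (s1 ++ s2) = F0 mu s1 + F0 mu s2,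
      forall (z : R[i]) (s : Xsum R), F0 mu (Xscale z s) = z * F0 mu s
    & forall s : Xsum R, F0 mu (Xadj s) = Num.conj (F0 mu s)] /\
  (* (ii) Cauchy-Schwarz type bound *)
  (forall (s : Xsum R) (a : {poly R[i]}),
     `|F0 mu (Xlact (pconj a) s)| ^+ 2
       <= fmu mu (pconj (hsum s) * hsum s) * fmu mu (pconj a * a)) /\
  (* (iii) GNS representation on D_f = C[x] and the strong *-representation *)
  [/\ is_inner_product (@gns_ip R mu),
      strong_star_rep (@gns_ip R mu) (@thetaF0 R) (@gns_rho R),
      forall (a b : {poly R[i]}) (s : Xsum R),
        F0 mu (Xact a s b)
        = gns_ip mu (thetaF0 s (gns_rho b (gns_phi R))) (gns_rho (pconj a) (gns_phi R))
    & forall u : {poly R[i]}, thetaF0 (Xd2 R) u = u].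
Proof.
split; [split|split].
- by move=> s1 s2 E; rewrite /F0 (hsum_wd E).
- by move=> s1 s2; rewrite /F0 hsum_cat (fmuD Hpoly).
- by move=> z s; rewrite /F0 hsum_scale (fmuZ Hpoly).
- by move=> s; rewrite /F0 hsum_adj (fmuJ Hpoly).
- by move=> s a; rewrite /F0 hsum_lact; exact: (CS Hpoly Hsupp).
split.
- split.
  + by move=> z u v w; rewrite /gns_ip mulrDr (fmuD Hpoly) -scalerAr (fmuZ Hpoly).
  + by move=> u v; exact: (phiC Hpoly).
  + by move=> u; exact: fmu_ge0.
  + by move=> u; exact: (fmu_def Hpoly Hsupp).
- constructor.
  + by move=> a z u v; rewrite /gns_rho mulrDr -scalerAr.
  + by move=> a b z u; rewrite /gns_rho mulrDl scalerAl.
  + by move=> a b u; rewrite /gns_rho mulrA.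
  + by move=> u; rewrite /gns_rho mul1r.
  + by move=> a u v; rewrite /gns_ip /gns_rho pconjM pconjK mulrCA mulrA.
  + by move=> s1 s2 E u; rewrite /thetaF0 (hsum_wd E).
  + by move=> s1 s2 u; rewrite /thetaF0 hsum_cat mulrDl.
  + by move=> z s u; rewrite /thetaF0 hsum_scale scalerAl.
  + by move=> s z u v; rewrite /thetaF0 mulrDr -scalerAr.
  + by move=> s u v; rewrite /gns_ip /thetaF0 hsum_adj pconjM pconjK mulrCA mulrA.
  + move=> a b s u v; rewrite /gns_ip /thetaF0 /gns_rho hsum_act pconjM pconjK.
    by rewrite ac4.
- move=> a b s; rewrite /F0 /gns_ip /thetaF0 /gns_rho /gns_phi !mulr1 pconjK.
  by rewrite hsum_act mulrA.
- by move=> u; rewrite /thetaF0 /hsum big_cons big_nil /= mulr1 addr0 mul1r.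
Qed.
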